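(* Let $h$ be a $K$-strongly convex distance-generating function on $\mathcal{X}$ and assume $\nabla h$ is $L_h$-Lipschitz. Then for every $y\in\mathcal{V}^*$, $$\|P_{x_1}(y)-P_{x_2}(y)\|\le\frac{L_h}{K}\|x_1-x_2\|\qquad\text{for all } x_1,x_2\in\operatorname{dom}\partial h.$$
   Context: $\mathcal{X}$ is a compact convex subset of a finite-dimensional normed space $\mathcal{V}$ with norm $\|\cdot\|$ and dual space $\mathcal{V}^*$ with dual norm $\|\cdot\|_*$. $h$ is differentiable on a domain containing $\mathcal{X}$, $K$-strongly convex in the sense $\langle\nabla h(x)-\nabla h(x'),x-x'\rangle\ge K\|x-x'\|^2$ for all $x,x'\in\mathcal{X}$, and $L_h$-Lipschitz gradient means $\|\nabla h(x)-\nabla h(x')\|_*\le L_h\|x-x'\|$. $\operatorname{dom}\partial h$ denotes the set of points of $\mathcal{X}$ where $h$ has nonempty subdifferential. The Bregman divergence is $D(p,x)=h(p)-h(x)-\langle\nabla h(x),p-x\rangle$ and the prox-mapping is $P_x(y)=\arg\min_{x'\in\mathcal{X}}\{\langle y,x-x'\rangle+D(x',x)\}$. *)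

(* Defs.v *)
From HB Require Import structures.
From mathcomp Require Import all_boot all_order all_algebra.
From mathcomp Require Import all_classical all_reals all_analysis.
Set Implicit Arguments. Unset Strict Implicit. Unset Printing Implicit Defensive.
Import Order.TTheory GRing.Theory Num.Theory.
Import numFieldNormedType.Exports.
Local Open Scope classical_set_scope.
Local Open Scope ring_scope.

(* The finite-dimensional space V is modelled as 'rV[R]_n (every
   finite-dimensional real normed space is linearly isomorphic to some
   (R^n, N)), equipped with an ARBITRARY norm N.  Its dual V^* is modelled as
   the space of real-valued (linear) functionals on V; an element y of V^* is
   given by a row vector, acting through the canonical pairing. *)

Definition is_norm (R : realType) (n : nat) (N : 'rV[R]_n -> R) : Prop :=
  [/\ forall x y, N (x + y) <= N x + N y,
      forall (a : R) x, N (a *: x) = `|a| * N x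
    & forall x, N x = 0 -> x = 0].

Definition pairing (R : realType) (n : nat) (y x : 'rV[R]_n) : R :=
  \sum_(i < n) y ord0 i * x ord0 i.

Definition dualnorm (R : realType) (n : nat) (N : 'rV[R]_n -> R)
  (f : 'rV[R]_n -> R) : R :=
  sup [set f v | v in [set v | N v <= 1]].

Definition gradh (R : realType) (n : nat) (h : 'rV[R]_n -> R) (x : 'rV[R]_n)
  : 'rV[R]_n -> R := fun v => 'd h x v.

Definition bregman (R : realType) (n : nat) (h : 'rV[R]_n -> R)
  (p x : 'rV[R]_n) : R :=
  h p - h x - gradh h x (p - x).

Definition is_prox (R : realType) (n : nat) (X : set 'rV[R]_n)
  (h : 'rV[R]_n -> R) (x y p : 'rV[R]_n) : Prop :=
  X p /\ forall x', X x' ->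
    pairing y (x - p) + bregman h p x <= pairing y (x - x') + bregman h x' x.

(* dom (subdifferential h): points of X where h (restricted to X, i.e. h plus
   the indicator of X) has a nonempty subdifferential *)
Definition dom_subdiff (R : realType) (n : nat) (X : set 'rV[R]_n)
  (h : 'rV[R]_n -> R) (x : 'rV[R]_n) : Prop :=
  X x /\ exists g : 'rV[R]_n,
    forall x', X x' -> h x' >= h x + pairing g (x' - x).

(* Main.v *)
Require Import Defs.
From HB Require Import structures.
From mathcomp Require Import all_boot all_order all_algebra.
From mathcomp Require Import all_classical all_reals all_analysis.
From mathcomp Require Import lra.
Import Order.TTheory GRing.Theory Num.Theory.
Import numFieldNormedType.Exports.
Local Open Scope classical_set_scope.
Local Open Scope ring_scope.
Local Open Scope convex_scope.
Set Implicit Arguments. Unset Strict Implicit.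

Section S.
Variables (R : realType) (n : nat).

Lemma coord_le (v : 'rV[R]_n) j : `|v ord0 j| <= `|v|.
Proof.
have /mapP[k Hk ->] : `|v ord0 j| \in [seq `|v x.1 x.2| | x : 'I_1 * 'I_n].
  by apply/mapP; exists (ord0, j) => //=; rewrite mem_enum.
by rewrite [leRHS]/Num.norm /= mx_normrE; apply/bigmax_geP; right => /=; exists k.
Qed.

Lemma ub_lin (G : 'rV[R]_n -> R) :
  (forall x y, G (x + y) <= G x + G y) ->
  (forall (a : R) x, G (a *: x) = `|a| * G x) ->
  exists M, 0 <= M /\ forall v, G v <= M * `|v|.
Proof.
move=> Gadd Gsc.
have G0 : G 0 = 0 by rewrite -(scale0r 0) Gsc normr0 mul0r.
have Gge0 x : 0 <= G x.
  have := Gadd x (-x); rewrite subrr G0 -scaleN1r Gsc normrN normr1 mul1r.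
  lra.
exists (\sum_(j < n) G (delta_mx 0 j)); split.
  by apply: sumr_ge0 => j _.
move=> v; rewrite {1}(row_sum_delta v).
apply: (@le_trans _ _ (\sum_(j < n) G (v 0 j *: delta_mx 0 j))).
  elim/big_ind2: _ => //; first by rewrite G0.
  move=> a1 a2 b1 b2 h1 h2; apply: le_trans (Gadd _ _) _; exact: lerD.
rewrite mulr_suml; apply: ler_sum => j _; rewrite Gsc.
by rewrite mulrC; apply: ler_wpM2l => //; exact: coord_le.
Qed.


Variable N : 'rV[R]_n -> R.
Hypothesis Nn : is_norm N.

Lemma N0 : N 0 = 0.
Proof. by case: Nn => _ Nsc _; rewrite -(scale0r 0) Nsc normr0 mul0r. Qed.

Lemma NN x : N (- x) = N x.
Proof. by case: Nn => _ Nsc _; rewrite -scaleN1r Nsc normrN normr1 mul1r. Qed.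

Lemma Nge0 x : 0 <= N x.
Proof.
case: Nn => Nadd _ _; have := Nadd x (-x); rewrite subrr N0 NN; lra.
Qed.

Lemma N_ub : exists M, 0 <= M /\ forall v, N v <= M * `|v|.
Proof. by case: Nn => Nadd Nsc _; exact: ub_lin. Qed.

Lemma N_cont : continuous N.
Proof.
case: N_ub => M [M0 HM]; case: Nn => Nadd Nsc _.
move=> x; apply/(@cvgrPdist_lt _ _ _ (nbhs x) (nbhs_filter x)) => e e0.
have eM : 0 < e / (M + 1) by rewrite divr_gt0 // ltr_wpDl.
have := @cvgr_dist_lt _ _ _ (nbhs x) _ id x (@cvg_id _ (nbhs x)) _ eM.
move=> /(_ (nbhs_filter x)); apply: filterS => t /= Hxt.
have H1 : `|N x - N t| <= N (x - t).
  rewrite ler_norml; apply/andP; split.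
    have := Nadd (t - x) x; rewrite subrK -opprB NN; lra.
  have := Nadd (x - t) t; rewrite subrK; lra.
apply: le_lt_trans H1 _; apply: le_lt_trans (HM _) _.
have : M * `|x - t| <= M * (e / (M + 1)) by apply: ler_wpM2l => //; exact: ltW.
move/le_lt_trans; apply.
rewrite mulrCA gtr_pMr // ltr_pdivrMr ?mul1r; lra.
Qed.

Lemma N_lb : exists2 c, 0 < c & forall v, c * `|v| <= N v.
Proof.
case: Nn => Nadd Nsc Neq0.
pose S := [set v : 'rV[R]_n | `|v| = 1].
have key v : v != 0 -> S (`|v|^-1 *: v).
  move=> v0; rewrite /S /= normrZ normrV ?unitfE ?normr_eq0 //.
  by rewrite normr_id mulVf // normr_eq0.
have [[u Su]|S0] := pselect (S !=set0); last first.
  exists 1 => // v; have [->|v0] := eqVneq v 0; first by rewrite normr0 mulr0 N0.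
  by exfalso; apply: S0; exists (`|v|^-1 *: v); exact: key.
have cS : compact S.
  apply: bounded_closed_compact.
    exists 1; split; first by rewrite num_real.
    by move=> M M1 x /= ->; exact: ltW.
  have := @preimage_closed _ _ (@Num.norm _ ('rV[R]_n : normedModType R)) [set x : R | x = 1]. apply; last exact: closed_eq. move=> x _; exact: norm_continuous.
have [c0 c0S Hmin] : exists2 c, c \in S & forall t, t \in S -> N c <= N t.
  apply: EVT_min_rV => //; first by exists u.
  by apply: continuous_subspaceT; exact: N_cont.
have c00 : c0 != 0.
  by apply/eqP => c0e; move: c0S; rewrite inE /S /= c0e normr0 => /esym/eqP; rewrite oner_eq0.
exists (N c0).
  rewrite lt_neqAle Nge0 andbT; apply/eqP => /esym /Neq0 /eqP; exact/negP.
move=> v; have [->|v0] := eqVneq v 0; first by rewrite normr0 mulr0 N0.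
have := Hmin _ (mem_set (key _ v0)); rewrite Nsc normrV ?unitfE ?normr_eq0 // normr_id.
by rewrite ler_pdivlMl ?normr_gt0 // mulrC.
Qed.


Lemma dual_bound (f : 'rV[R]_n -> R) :
  (forall x y, f (x + y) = f x + f y) -> (forall (a : R) x, f (a *: x) = a * f x) ->
  0 <= dualnorm N f /\ forall d, f d <= dualnorm N f * N d.
Proof.
move=> fD fZ.
have f0 : f 0 = 0 by rewrite -(scale0r 0) fZ mul0r.
have [M [M0 HM]] : exists M, 0 <= M /\ forall v, `|f v| <= M * `|v|.
  apply: ub_lin => [x y|a x]; first by rewrite fD ler_normD.
  by rewrite fZ normrM.
have [c c0 Hc] := N_lb.
set E := [set f v | v in [set v | N v <= 1]].
have hs : has_sup E.
  split; first by exists (f 0), 0 => //=; rewrite N0.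
  exists (M / c) => _ [v /= Nv <-].
  apply: le_trans (ler_norm _) _; apply: le_trans (HM v) _.
  rewrite ler_pdivlMr // -mulrA -{2}(mulr1 M); apply: ler_wpM2l => //.
  rewrite mulrC; exact: le_trans (Hc v) Nv.
have ub := sup_upper_bound hs.
split.
  by rewrite -f0; apply: ub; exists 0 => //=; rewrite N0.
move=> d; have [Nd0|Nd0] := eqVneq (N d) 0.
  by case: Nn => _ _ Neq; rewrite Nd0 mulr0 (Neq _ Nd0) f0.
have Ndp : 0 < N d by rewrite lt_neqAle eq_sym Nd0 Nge0.
have : f ((N d)^-1 *: d) <= dualnorm N f.
  apply: ub; exists ((N d)^-1 *: d) => //=.
  case: Nn => _ Nsc _; rewrite Nsc ger0_norm ?invr_ge0 ?Nge0 // mulVf //.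
by rewrite fZ -ler_pdivlMl ?invr_gt0 // invrK mulrC.
Qed.

Lemma fo (h : 'rV[R]_n -> R) p v A :
  differentiable h p ->
  (forall t : R, 0 < t -> t <= 1 -> A <= t^-1 * (h (p + t *: v) - h p)) ->
  A <= 'd h p v.
Proof.
move=> dh H.
rewrite -deriveE //.
have /cvg_ex[l Hl] := @diff_derivable _ _ _ h p v dh.
have : (fun t : R => t^-1 *: ((h \o shift p) (t *: v) - h p)) @ 0^'+ --> l.
  apply: cvg_trans Hl; apply: cvg_app.
  move=> B; rewrite /at_right/dnbhs/within !nbhs_simpl /=; apply: filterS => x Bx x0; apply: Bx; exact: lt0r_neq0.
move=> Hr.
rewrite /derive (cvg_lim _ Hl) //.
apply: (cvgr_to_ge Hr).
near=> t.
have t0 : 0 < t by near: t; exact: nbhs_right_gt.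
have t1 : t <= 1 by near: t; exact: nbhs_right_le.
by have := H t t0 t1; rewrite /= [t *: v + p]addrC.
Unshelve. all: by end_near.
Qed.

Lemma pairingD (y a b : 'rV[R]_n) : pairing y (a + b) = pairing y a + pairing y b.
Proof. by rewrite /pairing -big_split /=; apply: eq_bigr => i _; rewrite mxE mulrDr. Qed.

Lemma pairingZ (y a : 'rV[R]_n) (c : R) : pairing y (c *: a) = c * pairing y a.
Proof. by rewrite /pairing mulr_sumr; apply: eq_bigr => i _; rewrite mxE mulrCA. Qed.

Lemma pairingN (y a : 'rV[R]_n) : pairing y (- a) = - pairing y a.
Proof. by rewrite -scaleN1r pairingZ mulN1r. Qed.

Lemma prox_fo (X : set 'rV[R]_n) h x y p x' : convex_set X ->
  differentiable h p -> is_prox X h x y p -> X x' ->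
  pairing y (x' - p) + 'd h x (x' - p) <= 'd h p (x' - p).
Proof.
move=> cX dh [Xp P] Xx'.
apply: fo => // t t0 t1.
set v := x' - p.
have Xz : X (p + t *: v).
  have := cX x' p (Itv01 (ltW t0) t1) (mem_set Xx') (mem_set Xp).
  rewrite inE; congr X.
  rewrite /v scalerBr; set u := (_ <| _ |> _).
  have -> : u = t *: x' + (1 - t) *: p by [].
  by rewrite scalerBl scale1r addrCA addrA.
have := P _ Xz; rewrite /bregman /gradh.
have -> : x - (p + t *: v) = (x - p) - t *: v by rewrite opprD addrA.
have -> : p + t *: v - x = (p - x) + t *: v by rewrite addrAC.
have eL : 'd h x (p - x + t *: v) = 'd h x (p - x) + t * 'd h x v.
  by rewrite linearD linearZ.
have eP : pairing y (x - p - t *: v) = pairing y (x - p) - t * pairing y v.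
  by rewrite pairingD pairingN pairingZ.
rewrite eL eP ler_pdivlMl //.
move: (h (p + t *: v)) => hz; lra.
Qed.

Lemma combine (Dx1 Dx2 Dp1 Dp2 : 'rV[R]_n -> R) y (p1 p2 e : 'rV[R]_n) (K Lh : R) :
  0 < K ->
  (forall a b, Dx1 (a + b) = Dx1 a + Dx1 b) -> (forall (c : R) a, Dx1 (c *: a) = c * Dx1 a) ->
  (forall a b, Dx2 (a + b) = Dx2 a + Dx2 b) -> (forall (c : R) a, Dx2 (c *: a) = c * Dx2 a) ->
  (forall a, Dp1 (- a) = - Dp1 a) ->
  pairing y (p2 - p1) + Dx1 (p2 - p1) <= Dp1 (p2 - p1) ->
  pairing y (p1 - p2) + Dx2 (p1 - p2) <= Dp2 (p1 - p2) ->
  K * N (p1 - p2) ^+ 2 <= Dp1 (p1 - p2) - Dp2 (p1 - p2) ->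
  dualnorm N (fun v => Dx1 v - Dx2 v) <= Lh * N e ->
  N (p1 - p2) <= Lh / K * N e.
Proof.
move=> K0 x1D x1Z x2D x2Z p1N d1 d2 sm lp.
have x1N a : Dx1 (- a) = - Dx1 a by rewrite -scaleN1r x1Z mulN1r.
have [dn0 db] := dual_bound (f := fun v => Dx1 v - Dx2 v)
  (fun a b => ltac:(by rewrite /= x1D x2D opprD addrACA))
  (fun a b => ltac:(by rewrite /= x1Z x2Z mulrBr)).
have db' := db (p1 - p2).
have epp : p2 - p1 = - (p1 - p2) by rewrite opprB.
rewrite epp pairingN x1N p1N in d1.
move: d1 d2 sm db' lp dn0.
set d := p1 - p2.
set Dn := dualnorm _ _.
move=> d1 d2 sm db' lp dn0.
have Nd0 := Nge0 d; have Ne0 := Nge0 e.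
have H : K * N d ^+ 2 <= Lh * N e * N d.
  apply: le_trans sm _; apply: le_trans (_ : Dn * N d <= _); last first.
    exact: ler_wpM2r.
  apply: le_trans db'; move: d1 d2; move: (pairing y d) => a; lra.
rewrite mulrAC ler_pdivlMr //.
have [Nd|Nd] := eqVneq (N d) 0.
  by rewrite Nd mul0r; apply: le_trans lp; exact: dn0.
have Ndp : 0 < N d by rewrite lt_neqAle eq_sym Nd Nd0.
rewrite expr2 mulrA in H.
by rewrite mulrC -(ler_pM2r Ndp).
Qed.
End S.

Unset Implicit Arguments.
Local Close Scope convex_scope.

Theorem lemma2 (R : realType) (n : nat) (N : 'rV[R]_n -> R)
  (X : set 'rV[R]_n) (h : 'rV[R]_n -> R) (K Lh : R) :
  is_norm N ->
  compact X -> convex_set X ->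
  (exists U : set 'rV[R]_n, open U /\ X `<=` U /\
     forall x, U x -> differentiable h x) ->
  0 < K ->
  (forall x x', X x -> X x' ->
     gradh h x (x - x') - gradh h x' (x - x') >= K * N (x - x') ^+ 2) ->
  (forall x x', X x -> X x' ->
     dualnorm N (fun v => gradh h x v - gradh h x' v) <= Lh * N (x - x')) ->
  forall y x1 x2 p1 p2 : 'rV[R]_n,
    dom_subdiff X h x1 -> dom_subdiff X h x2 ->
    is_prox X h x1 y p1 -> is_prox X h x2 y p2 ->
    N (p1 - p2) <= Lh / K * N (x1 - x2).
Proof.
move=> Nn _ cX [U [_ [XU dU]]] K0 smon lip y x1 x2 p1 p2 [Xx1 _] [Xx2 _] Pr1 Pr2.
have Xp1 := Pr1.1; have Xp2 := Pr2.1.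
have d1 := prox_fo cX (dU _ (XU _ Xp1)) Pr1 Xp2.
have d2 := prox_fo cX (dU _ (XU _ Xp2)) Pr2 Xp1.
have sm := smon _ _ Xp1 Xp2.
have lp := lip _ _ Xx1 Xx2.
apply: (combine Nn K0 _ _ _ _ _ d1 d2 sm lp).
- by move=> a b; exact: raddfD.
- by move=> c a; exact: linearZ.
- by move=> a b; exact: raddfD.
- by move=> c a; exact: linearZ.
- by move=> a; exact: raddfN.
Qed.
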